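(* Let $\mathcal{W},\mathcal{V}\subseteq\mathbb{R}^p$ be nonempty closed convex sets containing $\mathbf{0}$, let $\mathcal{Z}$ be a data space, and let $\ell:\mathcal{W}\times\mathcal{V}\times\mathcal{Z}\to\mathbb{R}$ be differentiable in $(\mathbf{w},\mathbf{v})$. Assume: (i) ($\rho$-strongly-convex-strongly-concave) for some $\rho>0$, for every $\mathbf{v}$ and $z$ the map $\mathbf{w}\mapsto\ell(\mathbf{w},\mathbf{v};z)$ is $\rho$-strongly convex, and for every $\mathbf{w}$ and $z$ the map $\mathbf{v}\mapsto\ell(\mathbf{w},\mathbf{v};z)$ is $\rho$-strongly concave; (ii) ($G$-Lipschitz) for some $G>0$, $\|\nabla_{\mathbf{w}}\ell(\mathbf{w},\mathbf{v};z)\|_2\le G$ and $\|\nabla_{\mathbf{v}}\ell(\mathbf{w},\mathbf{v};z)\|_2\le G$ for all $\mathbf{w},\mathbf{v},z$. Fix a dataset $S=\{z_1,\dots,z_n\}\in\mathcal{Z}^n$, privacy parameters $\epsilon,\delta>0$, a number of iterations $T\ge1$, step sizes $\eta_t=\frac{1}{\rho t}$, and noise level $\sigma=c\,\frac{G\sqrt{T\log(1/\delta)}}{n\epsilon}$ for a constant $c>0$. Run DP-GDA (described in the context) on $S$, producing $(\bar{\mathbf{w}}_T,\bar{\mathbf{v}}_T)$, and for any dataset $S'$ differing from $S$ in exactly one element, run DP-GDA on $S'$ with the same realizations of the Gaussian noise vectors, producing $(\bar{\mathbf{w}}_T',\bar{\mathbf{v}}_T')$. Let $\zeta\in(\exp(-p/8),1)$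 and $$p_\zeta=1+\Big(\frac{8\log(2T/\zeta)}{p}\Big)^{1/4},\quad g_{\mathbf{w}}=\|\bar{\mathbf{w}}^*-\bar{\mathbf{w}}_T\|_2,\quad g_{\mathbf{v}}=\|\bar{\mathbf{v}}^*-\bar{\mathbf{v}}_T\|_2,$$ where $\bar{\mathbf{w}}^*=\arg\min_{\mathbf{w}\in\mathcal{W}}L_S(\mathbf{w},\bar{\mathbf{v}}_T)$ and $\bar{\mathbf{v}}^*=\arg\max_{\mathbf{v}\in\mathcal{V}}L_S(\bar{\mathbf{w}}_T,\mathbf{v})$. Then with probability at least $1-\zeta$ (over the noise), for every such $S'$, $$\|\bar{\mathbf{w}}_T-\bar{\mathbf{w}}_T'\|_2+\|\bar{\mathbf{v}}_T-\bar{\mathbf{v}}_T'\|_2\le\gamma,$$ where $$\gamma=\frac{4G}{n\rho}+\frac{2\sigma\sqrt{p}\log(eT)}{T}p_\zeta+4\sqrt{\log(eT)}\sqrt{\frac{G^2}{\rho^2T}+\frac{\sigma^2p}{\rho^2T}p_\zeta^2+\frac{2G\sigma\sqrt{p}}{\rho^2T}p_\zeta+\frac{(g_{\mathbf{w}}+g_{\mathbf{v}})\sigma\sqrt{p}}{\rho\log(eT)}p_\zeta}.$$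
   Context: Empirical risk: $L_S(\mathbf{w},\mathbf{v})=\frac1n\sum_{i=1}^n\ell(\mathbf{w},\mathbf{v};z_i)$. A differentiable $f$ is $\rho$-strongly convex if $f(\mathbf{x})-f(\mathbf{x}')\ge\langle\nabla f(\mathbf{x}'),\mathbf{x}-\mathbf{x}'\rangle+\frac\rho2\|\mathbf{x}-\mathbf{x}'\|_2^2$; $f$ is $\rho$-strongly concave if $-f$ is $\rho$-strongly convex. DP-GDA (Differentially Private Gradient Descent Ascent) on dataset $S$: initialize $\mathbf{w}_1=\mathbf{0}$, $\mathbf{v}_1=\mathbf{0}$; for $t=1,\dots,T$, sample independent $b_{\mathbf{w}},b_{\mathbf{v}}\sim\mathcal{N}(0,\sigma^2I_p)$ and set $\mathbf{w}_{t+1}=\mathrm{Proj}_{\mathcal{W}}\big(\mathbf{w}_t-\eta_t(\nabla_{\mathbf{w}}L_S(\mathbf{w}_t,\mathbf{v}_t)+b_{\mathbf{w}})\big)$, $\mathbf{v}_{t+1}=\mathrm{Proj}_{\mathcal{V}}\big(\mathbf{v}_t+\eta_t(\nabla_{\mathbf{v}}L_S(\mathbf{w}_t,\mathbf{v}_t)+b_{\mathbf{v}})\big)$, where $\mathrm{Proj}$ is Euclidean projection; output $\bar{\mathbf{w}}_T=\frac1T\sum_{t=1}^T\mathbf{w}_t$, $\bar{\mathbf{v}}_T=\frac1T\sum_{t=1}^T\mathbf{v}_t$. The stability notion compares the outputs on two datasets differing in one element, with the two runs using identical noise draws. *)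

(* Defs.v *)
From HB Require Import structures.
From mathcomp Require Import all_boot all_order all_algebra.
From mathcomp Require Import all_classical all_reals all_analysis.
Set Implicit Arguments. Unset Strict Implicit. Unset Printing Implicit Defensive.
Import Order.TTheory GRing.Theory Num.Theory.
Import numFieldNormedType.Exports.
Local Open Scope classical_set_scope.
Local Open Scope ring_scope.

Section DPGDA.
Variable R : realType.

Definition vec (p : nat) := 'rV[R]_p.

Definition dotp {p} (u v : vec p) : R := \sum_(i < p) u ord0 i * v ord0 i.
Definition enorm {p} (u : vec p) : R := Num.sqrt (\sum_(i < p) u ord0 i ^+ 2).

Definition grad {p} (f : vec p -> R) (x : vec p) : vec p :=
  \row_(i < p) ('D_(delta_mx ord0 i : vec p) f x).

Definition convex_set_ {p} (C : set (vec p)) :=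
  forall x y (t : R), C x -> C y -> 0 <= t <= 1 -> C (t *: x + (1 - t) *: y).

Definition strongly_convex_on {p} (rho : R) (C : set (vec p)) (f : vec p -> R) :=
  forall x x', C x -> C x' ->
    f x - f x' >= dotp (grad f x') (x - x') + rho / 2 * enorm (x - x') ^+ 2.

Definition strongly_concave_on {p} (rho : R) (C : set (vec p)) (f : vec p -> R) :=
  strongly_convex_on rho C (fun x => - f x).

(* minimizer / maximizer over C (unique under the hypotheses) *)
Definition argmin_on {p} (C : set (vec p)) (f : vec p -> R) : vec p :=
  xget 0 [set x | C x /\ forall y, C y -> f x <= f y].
Definition argmax_on {p} (C : set (vec p)) (f : vec p -> R) : vec p :=
  xget 0 [set x | C x /\ forall y, C y -> f y <= f x].

Definition proj {p} (C : set (vec p)) (x : vec p) : vec p :=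
  argmin_on C (fun y => enorm (x - y)).

Definition emp_risk {p n : nat} {Z : Type} (ell : vec p -> vec p -> Z -> R)
  (S : 'I_n -> Z) (w v : vec p) : R :=
  n%:R^-1 * \sum_(i < n) ell w v (S i).

(* DP-GDA iterates: run k = (w_{k+1}, v_{k+1}); step t = k+1 uses step size
   eta t and noise bw k, bv k *)
Fixpoint dpgda_run {p n : nat} {Z : Type} (ell : vec p -> vec p -> Z -> R)
  (W V : set (vec p)) (eta : nat -> R) (S : 'I_n -> Z)
  (bw bv : nat -> vec p) (k : nat) : vec p * vec p :=
  match k with
  | 0 => (0, 0)
  | k'.+1 =>
    let wv := dpgda_run ell W V eta S bw bv k' in
    let w := wv.1 in let v := wv.2 in
    (proj W (w - eta k'.+1 *: (grad (fun w0 => emp_risk ell S w0 v) w + bw k')),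
     proj V (v + eta k'.+1 *: (grad (fun v0 => emp_risk ell S w v0) v + bv k')))
  end.

Definition dpgda_avg {p n : nat} {Z : Type} (ell : vec p -> vec p -> Z -> R)
  (W V : set (vec p)) (eta : nat -> R) (S : 'I_n -> Z)
  (bw bv : nat -> vec p) (T : nat) : vec p * vec p :=
  (T%:R^-1 *: \sum_(k < T) (dpgda_run ell W V eta S bw bv k).1,
   T%:R^-1 *: \sum_(k < T) (dpgda_run ell W V eta S bw bv k).2).

(* noise coordinates: (b, t, j) = j-th coordinate of b_w (b = true) or
   b_v (b = false) at iteration t+1 *)
Definition noise_index (T p : nat) := (bool * 'I_T * 'I_p)%type.

Definition noise_vec {T p : nat} (N : noise_index T p -> R) (b : bool)
  (k : nat) : vec p :=
  \row_(j < p) match @insub _ (fun i => (i < T)%N) 'I_T k with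
               | Some t => N (b, t, j)
               | None => 0
               end.

(* law N(0, s^2) on R; degenerate s = 0 is the Dirac mass at 0 *)
Definition gauss_law (s : R) (B : set R) : \bar R :=
  if s == 0 then @dirac _ R 0 R B else normal_prob 0 s B.

Definition gaussian_iid {d} {Omega : measurableType d} {I : finType}
  (P : probability Omega R) (N : Omega -> I -> R) (s : R) : Prop :=
  (forall i, measurable_fun setT (fun om => N om i)) /\
  (forall i (B : set R), measurable B ->
      P [set om | B (N om i)] = gauss_law s B) /\
  (forall B : I -> set R, (forall i, measurable (B i)) ->
      P [set om | forall i, B i (N om i)] =
      (\prod_(i : I) P [set om | B i (N om i)])%E).

Definition differ_in_one {n : nat} {Z : Type} (S S' : 'I_n -> Z) : Prop :=
  exists i, S' i <> S i /\ forall j, j <> i -> S' j = S j.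

End DPGDA.

(* Main.v *)
Require Import Defs.
From HB Require Import structures.
From mathcomp Require Import all_boot all_order all_algebra.
From mathcomp Require Import all_classical all_reals all_analysis.
From mathcomp Require Import ring lra.
Import Order.TTheory GRing.Theory Num.Theory.
Import numFieldNormedType.Exports.
Local Open Scope classical_set_scope.
Local Open Scope ring_scope.
Set Implicit Arguments. Unset Strict Implicit. Unset Printing Implicit Defensive.

Section Vec.
Variable R : realType.
Variable p : nat.
Implicit Types u v w : vec R p.

Lemma CS_sum m (a b : 'I_m -> R) :
  (\sum_i a i * b i) ^+ 2 <= (\sum_i a i ^+ 2) * (\sum_i b i ^+ 2).
Proof.
set A := \sum_i a i ^+ 2; set B := \sum_i b i ^+ 2; set D := \sum_i a i * b i.
have A0 : 0 <= A by apply: sumr_ge0 => i _; exact: sqr_ge0.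
have B0 : 0 <= B by apply: sumr_ge0 => i _; exact: sqr_ge0.
have key : forall t, 0 <= A - 2 * t * D + t ^+ 2 * B.
  move=> t.
  have -> : A - 2 * t * D + t ^+ 2 * B = \sum_i (a i - t * b i) ^+ 2.
    rewrite /A /D /B.
    rewrite (_ : \sum_i (a i - t * b i) ^+ 2 =
       \sum_i (a i ^+ 2 - 2 * t * (a i * b i) + t ^+ 2 * b i ^+ 2)); last first.
      by apply: eq_bigr => i _; ring.
    rewrite big_split /= sumrB -!mulr_sumr; ring.
  by apply: sumr_ge0 => i _; exact: sqr_ge0.
have [B_eq0|B_gt0] := eqVneq B 0.
  have Dz : D = 0.
    have hb := psumr_eq0P (fun i _ => sqr_ge0 (b i)) B_eq0.
    rewrite /D big1 // => i _.
    have := hb i isT; rewrite expr2 => /eqP.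
    by rewrite mulf_eq0 orbb => /eqP ->; rewrite mulr0.
  by rewrite Dz B_eq0 expr0n /= mulr0.
have Bp : 0 < B by rewrite lt_def B_gt0 B0.
have := key (D / B).
move=> h.
have : 0 <= (A - 2 * (D / B) * D + (D / B) ^+ 2 * B) * B by apply: mulr_ge0.
have -> : (A - 2 * (D / B) * D + (D / B) ^+ 2 * B) * B = A * B - D ^+ 2.
  by field; rewrite gt_eqF.
by rewrite subr_ge0.
Qed.

Lemma sq_le_ge0 (x y : R) : 0 <= y -> x ^+ 2 <= y ^+ 2 -> x <= y.
Proof.
move=> y0 h; have [x0|x0] := lerP x 0; first exact: le_trans x0 y0.
by rewrite -(ler_pXn2r (_ : 0 < 2)%N) ?nnegrE ?(ltW x0).
Qed.

Lemma dotpC u v : dotp u v = dotp v u.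
Proof. by apply: eq_bigr => i _; rewrite mulrC. Qed.

Lemma dotpDl u v w : dotp (u + v) w = dotp u w + dotp v w.
Proof. by rewrite /dotp -big_split; apply: eq_bigr => i _; rewrite mxE mulrDl. Qed.

Lemma dotpZl k u w : dotp (k *: u) w = k * dotp u w.
Proof. by rewrite /dotp mulr_sumr; apply: eq_bigr => i _; rewrite mxE mulrA. Qed.

Lemma dotpNl u w : dotp (- u) w = - dotp u w.
Proof. by rewrite -scaleN1r dotpZl mulN1r. Qed.

Lemma dotpBl u v w : dotp (u - v) w = dotp u w - dotp v w.
Proof. by rewrite dotpDl dotpNl. Qed.

Lemma dotpDr u v w : dotp w (u + v) = dotp w u + dotp w v.
Proof. by rewrite dotpC dotpDl !(dotpC w). Qed.

Lemma dotpZr k u w : dotp w (k *: u) = k * dotp w u.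
Proof. by rewrite dotpC dotpZl dotpC. Qed.

Lemma dotpNr u w : dotp w (- u) = - dotp w u.
Proof. by rewrite dotpC dotpNl dotpC. Qed.

Lemma dotpBr u v w : dotp w (u - v) = dotp w u - dotp w v.
Proof. by rewrite dotpDr dotpNr. Qed.

Lemma dotp_suml m (F : 'I_m -> vec R p) w :
  dotp (\sum_(i < m) F i) w = \sum_(i < m) dotp (F i) w.
Proof.
elim: m F => [|m IH] F; first by rewrite !big_ord0 /dotp big1 // => i _; rewrite mxE mul0r.
by rewrite !big_ord_recr /= dotpDl IH.
Qed.

Lemma sumsq_ge0 u : 0 <= \sum_(i < p) u ord0 i ^+ 2.
Proof. by apply: sumr_ge0 => i _; exact: sqr_ge0. Qed.

Lemma enorm_ge0 u : 0 <= enorm u.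
Proof. exact: sqrtr_ge0. Qed.

Lemma enorm_sq u : enorm u ^+ 2 = dotp u u.
Proof. by rewrite /enorm sqr_sqrtr ?sumsq_ge0 //; apply: eq_bigr => i _; rewrite expr2. Qed.

Lemma dotp_ge0 u : 0 <= dotp u u.
Proof. rewrite -enorm_sq; exact: sqr_ge0. Qed.

Lemma CS u v : dotp u v <= enorm u * enorm v.
Proof.
apply: sq_le_ge0; first by apply: mulr_ge0; exact: enorm_ge0.
rewrite /enorm exprMn !sqr_sqrtr ?sumsq_ge0 //.
exact: (CS_sum (fun i => u ord0 i) (fun i => v ord0 i)).
Qed.

Lemma enormDsq u v : enorm (u + v) ^+ 2 = enorm u ^+ 2 + 2 * dotp u v + enorm v ^+ 2.
Proof. rewrite !enorm_sq !dotpDl !dotpDr (dotpC v u); ring. Qed.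

Lemma enormBsq u v : enorm (u - v) ^+ 2 = enorm u ^+ 2 - 2 * dotp u v + enorm v ^+ 2.
Proof. rewrite !enorm_sq !dotpBl !dotpBr (dotpC v u); ring. Qed.

Lemma enormD u v : enorm (u + v) <= enorm u + enorm v.
Proof.
apply: sq_le_ge0; first by apply: addr_ge0; exact: enorm_ge0.
rewrite enormDsq; have := CS u v; lra.
Qed.

Lemma enormZ k u : enorm (k *: u) = `|k| * enorm u.
Proof.
rewrite /enorm -sqrtr_sqr -sqrtrM ?sqr_ge0 // mulr_sumr.
by congr Num.sqrt; apply: eq_bigr => i _; rewrite mxE exprMn.
Qed.

Lemma enormN u : enorm (- u) = enorm u.
Proof. by rewrite -scaleN1r enormZ normrN normr1 mul1r. Qed.

Lemma enormB_sym u v : enorm (u - v) = enorm (v - u).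
Proof. by rewrite -enormN opprB. Qed.

Lemma enorm0 : enorm (0 : vec R p) = 0.
Proof. by rewrite /enorm big1 ?sqrtr0 // => i _; rewrite mxE expr0n. Qed.

Lemma enorm_sum m (F : 'I_m -> vec R p) :
  enorm (\sum_(i < m) F i) <= \sum_(i < m) enorm (F i).
Proof.
elim: m F => [|m IH] F; first by rewrite !big_ord0 enorm0.
rewrite !big_ord_recr /=; apply: le_trans (enormD _ _) _.
by rewrite lerD2r.
Qed.

Lemma coord_le_enorm u i : `|u ord0 i| <= enorm u.
Proof.
apply: sq_le_ge0; first exact: enorm_ge0.
rewrite /enorm sqr_sqrtr ?sumsq_ge0 // real_normK ?num_real //.
rewrite (bigD1 i) //= lerDl; apply: sumr_ge0 => j _; exact: sqr_ge0.
Qed.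

Section Proj.
Variable C : set (vec R p).

Lemma cont_sum m (h : 'I_m -> vec R p -> R) :
  (forall i, continuous (h i)) -> continuous (fun y => \sum_(i < m) h i y).
Proof.
elim: m h => [|m IH] h hc.
  by move=> y; rewrite (_ : (fun y => _) = fun=> 0); [exact: cst_continuous|apply/funext=> z; rewrite big_ord0].
have -> : (fun y => \sum_(i < m.+1) h i y) =
   ((fun y => \sum_(i < m) h (widen_ord (leqnSn m) i) y) + h ord_max)%R.
  by apply/funext => z; rewrite big_ord_recr.
move=> y; apply: continuousD; last exact: hc.
by apply: IH => i; exact: hc.
Qed.

Lemma proj_exists x : closed C -> C 0 -> (exists M, forall y, C y -> enorm y <= M) ->
  exists y, C y /\ forall y', C y' -> enorm (x - y) <= enorm (x - y').
Proof.
move=> Ccl C0 [M HM].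
have cC : compact C.
  apply: bounded_closed_compact => //.
  exists M; split; first exact: num_real.
  move=> M' HM' y Cy /=.
  rewrite [X in X <= _]/Num.norm /= mx_normrE; apply: bigmax_le.
    exact: le_trans (enorm_ge0 y) (le_trans (HM _ Cy) (ltW HM')).
  move=> [i j] _ /=; rewrite (ord1 i).
  exact: le_trans (coord_le_enorm _ _) (le_trans (HM _ Cy) (ltW HM')).
pose f := fun y : vec R p => \sum_(i < p) (x ord0 i - y ord0 i) ^+ 2.
have fc : continuous f.
  apply: cont_sum => i y.
  rewrite (_ : (fun y0 : vec R p => (x ord0 i - y0 ord0 i) ^+ 2) =
     ((fun y0 : vec R p => x ord0 i - y0 ord0 i) \* (fun y0 : vec R p => x ord0 i - y0 ord0 i))%R); last first.
    by apply/funext => z /=; rewrite expr2.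
  have hb : {for y, continuous (fun y0 : vec R p => x ord0 i - y0 ord0 i)}.
    apply: (@continuousB _ _ _ (fun=> x ord0 i) (fun y0 : vec R p => y0 ord0 i)).
      exact: cst_continuous.
    exact: coord_continuous.
  exact: continuousM.
have [c cC' cmin] := @EVT_min_rV R p f C (ex_intro _ 0 C0) cC (continuous_subspaceT fc).
exists c; split; first by rewrite inE in cC'.
move=> y' Cy'; rewrite /enorm ler_sqrt; last by apply: sumr_ge0 => i _; exact: sqr_ge0.
have := cmin y'; rewrite inE => /(_ Cy').
have E : forall z, f z = \sum_(i < p) (x - z) ord0 i ^+ 2.
  by move=> z; apply: eq_bigr => i _; rewrite !mxE.
by rewrite !E.
Qed.
Lemma sq_mono (a b : R) : 0 <= a -> a <= b -> a ^+ 2 <= b ^+ 2.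
Proof. by move=> a0 ab; rewrite ler_pXn2r // nnegrE //; exact: le_trans ab. Qed.

Lemma proj_var x c y : convex_set_ C -> C c ->
  (forall y', C y' -> enorm (x - c) <= enorm (x - y')) -> C y ->
  dotp (x - c) (y - c) <= 0.
Proof.
move=> Ccv Cc cmin Cy.
set d := dotp (x - c) (y - c); set q := enorm (y - c) ^+ 2.
have q0 : 0 <= q by exact: sqr_ge0.
have h : forall t, 0 < t -> t <= 1 -> 2 * d <= t * q.
  move=> t t0 t1.
  have Cz : C (t *: y + (1 - t) *: c) by apply: Ccv => //; rewrite (ltW t0) t1.
  have := sq_mono (enorm_ge0 _) (cmin _ Cz).
  have -> : x - (t *: y + (1 - t) *: c) = (x - c) - t *: (y - c).
    by apply/rowP => i; rewrite !mxE; ring.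
  rewrite (enormBsq (x - c) (t *: (y - c))) dotpZr enormZ exprMn real_normK ?num_real // -/d -/q.
  move=> hh.
  have : 0 <= t * (t * q - 2 * d) by rewrite mulrBr; lra.
  by rewrite pmulr_rge0 // subr_ge0.
rewrite leNgt; apply/negP => d0.
have dq : 0 < d + q by lra.
have t1 : d / (d + q) <= 1 by rewrite ler_pdivrMr // mul1r; lra.
have := h _ (divr_gt0 d0 dq) t1.
rewrite mulrAC ler_pdivlMr // => hh.
have : 0 < d * d by apply: mulr_gt0.
have : 0 <= d * q by apply: mulr_ge0; lra.
lra.
Qed.

Lemma proj_spec x : closed C -> C 0 -> (exists M, forall y, C y -> enorm y <= M) ->
  C (Defs.proj C x) /\ forall y', C y' -> enorm (x - Defs.proj C x) <= enorm (x - y').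
Proof.
move=> Ccl C0 HM; rewrite /Defs.proj /argmin_on.
apply: (@xgetPex _ 0 [set y | C y /\ forall y', C y' -> enorm (x - y) <= enorm (x - y')]).
exact: proj_exists.
Qed.

Lemma proj_nonexp x1 x2 : closed C -> C 0 -> convex_set_ C ->
  (exists M, forall y, C y -> enorm y <= M) ->
  enorm (Defs.proj C x1 - Defs.proj C x2) ^+ 2 <= enorm (x1 - x2) ^+ 2.
Proof.
move=> Ccl C0 Ccv HM.
have [C1 m1] := proj_spec x1 Ccl C0 HM.
have [C2 m2] := proj_spec x2 Ccl C0 HM.
set p1 := Defs.proj C x1 in C1 m1 *; set p2 := Defs.proj C x2 in C2 m2 *.
have v1 := proj_var Ccv C1 m1 C2.
have v2 := proj_var Ccv C2 m2 C1.
have key : enorm (p1 - p2) ^+ 2 <= dotp (x1 - x2) (p1 - p2).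
  move: v1 v2; rewrite enorm_sq !dotpBl !dotpBr.
  have := dotpC p1 x1; have := dotpC p2 x1; have := dotpC p1 x2; have := dotpC p2 x2;
  have := dotpC p1 p2.
  lra.
apply: sq_mono; first exact: enorm_ge0.
have [e0|e0] := eqVneq (enorm (p1 - p2)) 0; first by rewrite e0; exact: enorm_ge0.
have ep : 0 < enorm (p1 - p2) by rewrite lt_def e0 enorm_ge0.
have := le_trans key (CS _ _).
by rewrite expr2 [X in _ <= X]mulrC ler_pM2l.
Qed.

End Proj.

Lemma avg_norm n (a : 'I_n -> vec R p) (G : R) : (0 < n)%N ->
  (forall i, enorm (a i) <= G) -> enorm (n%:R^-1 *: \sum_(i < n) a i) <= G.
Proof.
move=> n0 h; rewrite enormZ ger0_norm ?invr_ge0 ?ler0n //.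
have n0' : 0 < n%:R :> R by rewrite ltr0n.
rewrite ler_pdivrMl //; apply: le_trans (enorm_sum _) _.
apply: le_trans (ler_sum _ (fun i _ => h i)) _.
by rewrite sumr_const card_ord mulr_natl.
Qed.

Lemma avg_diff n (a b : 'I_n -> vec R p) (G : R) (k : 'I_n) : (0 < n)%N ->
  (forall j, j <> k -> a j = b j) -> enorm (a k) <= G -> enorm (b k) <= G ->
  enorm (n%:R^-1 *: \sum_(i < n) a i - n%:R^-1 *: \sum_(i < n) b i) <= 2 * G / n%:R.
Proof.
move=> n0 hab ha hb.
have n0' : 0 < n%:R :> R by rewrite ltr0n.
rewrite -scalerBr -sumrB (bigD1 k) //= big1 ?addr0; last first.
  by move=> j /eqP jk; rewrite hab // subrr.
rewrite enormZ ger0_norm ?invr_ge0 ?ler0n // mulrC ler_pM2r ?invr_gt0 //.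
apply: le_trans (enormD _ _) _; rewrite enormN; lra.
Qed.

Lemma avg_mono n (a a' b b' : 'I_n -> vec R p) (x y : vec R p) (q : R) : (0 < n)%N ->
  (forall i, q <= dotp (a i - a' i) x - dotp (b i - b' i) y) ->
  q <= dotp (n%:R^-1 *: \sum_(i < n) a i - n%:R^-1 *: \sum_(i < n) a' i) x
       - dotp (n%:R^-1 *: \sum_(i < n) b i - n%:R^-1 *: \sum_(i < n) b' i) y.
Proof.
move=> n0 h.
have n0' : 0 < n%:R :> R by rewrite ltr0n.
rewrite -!scalerBr !dotpZl -!sumrB !dotp_suml -mulrBr -sumrB.
rewrite ler_pdivlMl //; apply: le_trans (ler_sum _ (fun i _ => h i)).
by rewrite sumr_const card_ord mulr_natl.
Qed.

Lemma sc_bounded (C : set (vec R p)) (f : vec R p -> R) (rho G : R) : 0 < rho ->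
  strongly_convex_on rho C f -> C 0 -> (forall x, C x -> enorm (grad f x) <= G) ->
  forall x, C x -> enorm x <= 2 * G / rho.
Proof.
move=> r0 sc C0 hG x Cx.
have h1 := sc _ _ C0 Cx.
have h2 := sc _ _ Cx C0.
move: h1 h2; rewrite !subr0 sub0r enormN dotpNr.
have hcs := CS (grad f x - grad f 0) x.
have hn := enormD (grad f x) (- grad f 0).
rewrite enormN in hn.
have g1 := hG _ Cx; have g2 := hG _ C0.
move: hcs; rewrite dotpBl => hcs h1 h2.
have e0 := enorm_ge0 x.
have key : rho * enorm x ^+ 2 <= 2 * G * enorm x.
  have : enorm (grad f x - grad f 0) * enorm x <= 2 * G * enorm x.
    by apply: ler_wpM2r => //; lra.
  lra.
have [ez|ez] := eqVneq (enorm x) 0.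
  by rewrite ez; apply: divr_ge0 => //; [have := enorm_ge0 (grad f x); lra|exact: ltW].
have ep : 0 < enorm x by rewrite lt_def ez e0.
rewrite ler_pdivlMr // mulrC.
by rewrite expr2 mulrA in key; rewrite -(ler_pM2r ep).
Qed.

Section Grad.
Variables (Z : Type) (ell : vec R p -> vec R p -> Z -> R) (W V : set (vec R p)).
Hypothesis Hd : forall w v z, W w -> V v ->
  differentiable (fun x : vec R p * vec R p => ell x.1 x.2 z) (w, v).

Lemma derW w v z e : W w -> V v -> derivable (fun w0 => ell w0 v z) w e.
Proof.
move=> Ww Vv; apply: diff_derivable.
have -> : (fun w0 => ell w0 v z) = (fun x : vec R p * vec R p => ell x.1 x.2 z) \o (fun w0 => (w0, v)) by [].
apply: differentiable_comp; last exact: Hd.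
apply: differentiable_pair => //.

Qed.

Lemma derV w v z e : W w -> V v -> derivable (fun v0 => ell w v0 z) v e.
Proof.
move=> Ww Vv; apply: diff_derivable.
have -> : (fun v0 => ell w v0 z) = (fun x : vec R p * vec R p => ell x.1 x.2 z) \o (fun v0 => (w, v0)) by [].
apply: differentiable_comp; last exact: Hd.
apply: differentiable_pair => //.

Qed.

Lemma grad_avg (n : nat) (h : 'I_n -> vec R p -> R) (x : vec R p) :
  (forall i e, derivable (h i) x e) ->
  grad (fun y => n%:R^-1 * \sum_(i < n) h i y) x = n%:R^-1 *: \sum_(i < n) grad (h i) x.
Proof.
move=> hd; apply/rowP => j; rewrite !mxE summxE.
have -> : (fun y => n%:R^-1 * \sum_(i < n) h i y) = n%:R^-1 \*: \sum_(i < n) h i.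
  by apply/funext => y; rewrite fct_sumE.
rewrite deriveZ; last exact: derivable_sum.
rewrite derive_sum //; congr (_ * _); apply: eq_bigr => i _; rewrite mxE.
done.
Qed.

Lemma gradN (f : vec R p -> R) x : (forall e, derivable f x e) ->
  grad (fun y => - f y) x = - grad f x.
Proof.
move=> hd; apply/rowP => j; rewrite !mxE.
exact: (deriveN (hd _)).
Qed.

Lemma grad_emp_w n (S : 'I_n -> Z) w v : W w -> V v ->
  grad (fun w0 => emp_risk ell S w0 v) w = n%:R^-1 *: \sum_(i < n) grad (fun w0 => ell w0 v (S i)) w.
Proof.
move=> Ww Vv; rewrite /emp_risk.
apply: (grad_avg (h := fun i w0 => ell w0 v (S i))) => i e; exact: derW.
Qed.

Lemma grad_emp_v n (S : 'I_n -> Z) w v : W w -> V v ->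
  grad (fun v0 => emp_risk ell S w v0) v = n%:R^-1 *: \sum_(i < n) grad (fun v0 => ell w v0 (S i)) v.
Proof.
move=> Ww Vv; rewrite /emp_risk.
apply: (grad_avg (h := fun i v0 => ell w v0 (S i))) => i e; exact: derV.
Qed.

Variable rho : R.
Hypothesis Hcvx : forall v z, V v -> strongly_convex_on rho W (fun w => ell w v z).
Hypothesis Hccv : forall w z, W w -> strongly_concave_on rho V (fun v => ell w v z).

Lemma mono_sample z w w' v v' : W w -> W w' -> V v -> V v' ->
  rho * (enorm (w - w') ^+ 2 + enorm (v - v') ^+ 2) <=
  dotp (grad (fun w0 => ell w0 v z) w - grad (fun w0 => ell w0 v' z) w') (w - w')
  - dotp (grad (fun v0 => ell w v0 z) v - grad (fun v0 => ell w' v0 z) v') (v - v').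
Proof.
move=> Ww Ww' Vv Vv'.
have h1 := Hcvx z Vv Ww' Ww.
have h2 := Hcvx z Vv' Ww Ww'.
have h3 := Hccv z Ww Vv' Vv.
have h4 := Hccv z Ww' Vv Vv'.
rewrite /= gradN in h3; last by move=> e; exact: derV.
rewrite /= gradN in h4; last by move=> e; exact: derV.
move: h1 h2 h3 h4.
set g1 := grad (fun w0 => ell w0 v z) w.
set g2 := grad (fun w0 => ell w0 v' z) w'.
set g3 := grad (fun v0 => ell w v0 z) v.
set g4 := grad (fun v0 => ell w' v0 z) v'.
rewrite (enormB_sym w' w) (enormB_sym v' v) !dotpNl !dotpBl !dotpBr.
lra.
Qed.
End Grad.

Lemma step_abstract (a b X1 X2 X3 Y1 Y2 Y3 : vec R p) (rho G e eta : R) :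
  0 <= eta ->
  rho * (enorm a ^+ 2 + enorm b ^+ 2) <= dotp (X1 - X2) a - dotp (Y1 - Y2) b ->
  enorm (X2 - X3) <= e -> enorm (Y2 - Y3) <= e ->
  enorm X1 <= G -> enorm X3 <= G -> enorm Y1 <= G -> enorm Y3 <= G ->
  enorm (a - eta *: (X1 - X3)) ^+ 2 + enorm (b + eta *: (Y1 - Y3)) ^+ 2 <=
  (1 - 2 * eta * rho) * (enorm a ^+ 2 + enorm b ^+ 2) + 2 * eta * e * (enorm a + enorm b)
  + eta ^+ 2 * (8 * G ^+ 2).
Proof.
move=> eta0 hm hX hY hX1 hX3 hY1 hY3.
rewrite enormBsq enormDsq !dotpZr !enormZ !exprMn real_normK ?num_real //.
have hDX : enorm (X1 - X3) ^+ 2 <= 4 * G ^+ 2.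
  have h := enormD X1 (- X3); rewrite enormN in h.
  have h' : enorm (X1 - X3) <= 2 * G by lra.
  have := sq_mono (enorm_ge0 _) h'; rewrite exprMn; lra.
have hDY : enorm (Y1 - Y3) ^+ 2 <= 4 * G ^+ 2.
  have h := enormD Y1 (- Y3); rewrite enormN in h.
  have h' : enorm (Y1 - Y3) <= 2 * G by lra.
  have := sq_mono (enorm_ge0 _) h'; rewrite exprMn; lra.
have cX : dotp (X3 - X2) a <= e * enorm a.
  apply: le_trans (CS _ _) _; rewrite enormB_sym; apply: ler_wpM2r => //; exact: enorm_ge0.
have cY : dotp (Y2 - Y3) b <= e * enorm b.
  apply: le_trans (CS _ _) _; apply: ler_wpM2r => //; exact: enorm_ge0.
have key : rho * (enorm a ^+ 2 + enorm b ^+ 2) - e * (enorm a + enorm b) <=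
   dotp (X1 - X3) a - dotp (Y1 - Y3) b.
  move: hm cX cY; rewrite !dotpBl; lra.
have k1 : eta * (rho * (enorm a ^+ 2 + enorm b ^+ 2) - e * (enorm a + enorm b)) <=
   eta * (dotp (X1 - X3) a - dotp (Y1 - Y3) b) by apply: ler_wpM2l.
have k2 : eta ^+ 2 * enorm (X1 - X3) ^+ 2 <= eta ^+ 2 * (4 * G ^+ 2).
  by apply: ler_wpM2l => //; exact: sqr_ge0.
have k3 : eta ^+ 2 * enorm (Y1 - Y3) ^+ 2 <= eta ^+ 2 * (4 * G ^+ 2).
  by apply: ler_wpM2l => //; exact: sqr_ge0.
rewrite (dotpC a) (dotpC b).
move: k1 k2 k3.
set A2 := enorm a ^+ 2; set B2 := enorm b ^+ 2; set dX := dotp (X1 - X3) a; set dY := dotp (Y1 - Y3) b.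
set nX := enorm (X1 - X3) ^+ 2; set nY := enorm (Y1 - Y3) ^+ 2.
set An := enorm a; set Bn := enorm b.
move=> k1 k2 k3.
have -> : (1 - 2 * eta * rho) * (A2 + B2) + 2 * eta * e * (An + Bn) + eta ^+ 2 * (8 * G ^+ 2)
  = A2 + B2 - 2 * (eta * (rho * (A2 + B2) - e * (An + Bn))) + (eta ^+ 2 * (4 * G ^+ 2) + eta ^+ 2 * (4 * G ^+ 2)) by ring.
have -> : A2 - 2 * (eta * dX) + eta ^+ 2 * nX + (B2 + 2 * (eta * dotp (Y1 - Y3) b) + eta ^+ 2 * nY)
  = A2 + B2 - 2 * (eta * (dX - dY)) + (eta ^+ 2 * nX + eta ^+ 2 * nY) by rewrite /dY; ring.
lra.
Qed.

Section Step.
Variables (Z : Type) (ell : vec R p -> vec R p -> Z -> R) (W V : set (vec R p)).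
Variables (rho G : R) (n : nat) (S S' : 'I_n -> Z).
Hypothesis Hd : forall w v z, W w -> V v ->
  differentiable (fun x : vec R p * vec R p => ell x.1 x.2 z) (w, v).
Hypothesis Hcvx : forall v z, V v -> strongly_convex_on rho W (fun w => ell w v z).
Hypothesis Hccv : forall w z, W w -> strongly_concave_on rho V (fun v => ell w v z).
Hypothesis HG : forall w v z, W w -> V v ->
     enorm (grad (fun w0 => ell w0 v z) w) <= G /\
     enorm (grad (fun v0 => ell w v0 z) v) <= G.
Hypothesis n0 : (0 < n)%N.
Hypothesis HS : differ_in_one S S'.

Definition FW (S0 : 'I_n -> Z) w v := grad (fun w0 => emp_risk ell S0 w0 v) w.
Definition FV (S0 : 'I_n -> Z) w v := grad (fun v0 => emp_risk ell S0 w v0) v.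

Lemma FW_norm S0 w v : W w -> V v -> enorm (FW S0 w v) <= G.
Proof.
move=> Ww Vv; rewrite /FW (grad_emp_w Hd) //; apply: avg_norm => // i.
by have [] := HG (S0 i) Ww Vv.
Qed.

Lemma FV_norm S0 w v : W w -> V v -> enorm (FV S0 w v) <= G.
Proof.
move=> Ww Vv; rewrite /FV (grad_emp_v Hd) //; apply: avg_norm => // i.
by have [] := HG (S0 i) Ww Vv.
Qed.

Lemma FW_diff w v : W w -> V v -> enorm (FW S w v - FW S' w v) <= 2 * G / n%:R.
Proof.
move=> Ww Vv; have [k [_ hk]] := HS.
rewrite /FW !(grad_emp_w Hd) //; apply: (avg_diff (k := k)) => //.
- by move=> j jk; rewrite hk.
- by have [] := HG (S k) Ww Vv.
- by have [] := HG (S' k) Ww Vv.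
Qed.

Lemma FV_diff w v : W w -> V v -> enorm (FV S w v - FV S' w v) <= 2 * G / n%:R.
Proof.
move=> Ww Vv; have [k [_ hk]] := HS.
rewrite /FV !(grad_emp_v Hd) //; apply: (avg_diff (k := k)) => //.
- by move=> j jk; rewrite hk.
- by have [] := HG (S k) Ww Vv.
- by have [] := HG (S' k) Ww Vv.
Qed.

Lemma F_mono S0 w v w' v' : W w -> V v -> W w' -> V v' ->
  rho * (enorm (w - w') ^+ 2 + enorm (v - v') ^+ 2) <=
  dotp (FW S0 w v - FW S0 w' v') (w - w') - dotp (FV S0 w v - FV S0 w' v') (v - v').
Proof.
move=> Ww Vv Ww' Vv'.
rewrite /FW /FV !(grad_emp_w Hd) // !(grad_emp_v Hd) //.
apply: avg_mono => // i.
exact: (mono_sample Hd Hcvx Hccv).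
Qed.
Hypothesis Wcl : closed W.
Hypothesis Vcl : closed V.
Hypothesis W0 : W 0.
Hypothesis V0 : V 0.
Hypothesis Wcv : convex_set_ W.
Hypothesis Vcv : convex_set_ V.
Hypothesis Wb : exists M, forall y, W y -> enorm y <= M.
Hypothesis Vb : exists M, forall y, V y -> enorm y <= M.

Lemma step_bound w v w' v' (eta : R) (bw bv : vec R p) :
  W w -> V v -> W w' -> V v' -> 0 <= eta ->
  enorm (Defs.proj W (w - eta *: (FW S w v + bw)) - Defs.proj W (w' - eta *: (FW S' w' v' + bw))) ^+ 2
  + enorm (Defs.proj V (v + eta *: (FV S w v + bv)) - Defs.proj V (v' + eta *: (FV S' w' v' + bv))) ^+ 2
  <= (1 - 2 * eta * rho) * (enorm (w - w') ^+ 2 + enorm (v - v') ^+ 2)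
     + 2 * eta * (2 * G / n%:R) * (enorm (w - w') + enorm (v - v'))
     + eta ^+ 2 * (8 * G ^+ 2).
Proof.
move=> Ww Vv Ww' Vv' eta0.
have h1 := proj_nonexp (w - eta *: (FW S w v + bw)) (w' - eta *: (FW S' w' v' + bw)) Wcl W0 Wcv Wb.
have h2 := proj_nonexp (v + eta *: (FV S w v + bv)) (v' + eta *: (FV S' w' v' + bv)) Vcl V0 Vcv Vb.
have e1 : (w - eta *: (FW S w v + bw)) - (w' - eta *: (FW S' w' v' + bw)) =
   (w - w') - eta *: (FW S w v - FW S' w' v') by apply/rowP => i; rewrite !mxE; ring.
have e2 : (v + eta *: (FV S w v + bv)) - (v' + eta *: (FV S' w' v' + bv)) =
   (v - v') + eta *: (FV S w v - FV S' w' v') by apply/rowP => i; rewrite !mxE; ring.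
rewrite e1 in h1; rewrite e2 in h2.
apply: le_trans (lerD h1 h2) _.
apply: (step_abstract (X2 := FW S w' v') (Y2 := FV S w' v')) => //.
- exact: F_mono.
- exact: FW_diff.
- exact: FV_diff.
- exact: FW_norm.
- exact: FW_norm.
- exact: FV_norm.
- exact: FV_norm.
Qed.

End Step.

End Vec.

Section RealRec.
Variable R : realType.


Lemma rec_real (K b c X Y : R) : 1 <= K -> 0 <= b -> 0 <= c -> 0 <= X -> 0 <= Y ->
  X <= (b + c * (Num.sqrt K)^-1) ^+ 2 -> Y <= b + c * (Num.sqrt K)^-1 ->
  (1 - 2 / (K + 1)) * X + 2 * b * Y / (K + 1) + c ^+ 2 / (K + 1) ^+ 2
  <= (b + c * (Num.sqrt (K + 1))^-1) ^+ 2.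
Proof.
move=> K1 b0 c0 X0 Y0 hX hY.
have K0 : 0 < K by lra.
have K10 : 0 < K + 1 by lra.
set s := Num.sqrt K; set s' := Num.sqrt (K + 1).
have s0 : 0 < s by rewrite sqrtr_gt0.
have s0' : 0 < s' by rewrite sqrtr_gt0.
have ss : s ^+ 2 = K by rewrite sqr_sqrtr // ltW.
have ss' : s' ^+ 2 = K + 1 by rewrite sqr_sqrtr // ltW.
set a := c * s^-1; set a' := c * s'^-1.
have a0 : 0 <= a by apply: mulr_ge0 => //; rewrite invr_ge0 ltW.
have a0' : 0 <= a' by apply: mulr_ge0 => //; rewrite invr_ge0 ltW.
have aa : a ^+ 2 = c ^+ 2 / K by rewrite /a exprMn exprVn ss.
have aa' : a' ^+ 2 = c ^+ 2 / (K + 1) by rewrite /a' exprMn exprVn ss'.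
have h1 : (K / (K + 1)) * a <= a'.
  apply: sq_le_ge0 => //.
  rewrite exprMn aa aa'.
  rewrite -subr_ge0.
  have -> : c ^+ 2 / (K + 1) - (K / (K + 1)) ^+ 2 * (c ^+ 2 / K) = c ^+ 2 / (K + 1) ^+ 2.
    by field; rewrite !gt_eqF.
  apply: divr_ge0; [exact: sqr_ge0|exact: sqr_ge0].
have h2 : (1 - 2 / (K + 1)) * a ^+ 2 + c ^+ 2 / (K + 1) ^+ 2 <= a' ^+ 2.
  rewrite aa aa' -subr_ge0.
  have -> : c ^+ 2 / (K + 1) - ((1 - 2 / (K + 1)) * (c ^+ 2 / K) + c ^+ 2 / (K + 1) ^+ 2)
     = c ^+ 2 / (K * (K + 1) ^+ 2).
    by field; rewrite !gt_eqF.
  apply: divr_ge0; first exact: sqr_ge0.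
  by apply: mulr_ge0; [exact: ltW|exact: sqr_ge0].
have cf : 0 <= 1 - 2 / (K + 1).
  rewrite subr_ge0 ler_pdivrMr //; lra.
have t1 : (1 - 2 / (K + 1)) * X <= (1 - 2 / (K + 1)) * (b + a) ^+ 2 by apply: ler_wpM2l.
have t2 : 2 * b * Y / (K + 1) <= 2 * b * (b + a) / (K + 1).
  apply: ler_wpM2r; first by rewrite invr_ge0 ltW.
  by apply: ler_wpM2l => //; lra.
have -> : (b + a') ^+ 2 = b ^+ 2 + 2 * b * a' + a' ^+ 2 by ring.
have e : (1 - 2 / (K + 1)) * (b + a) ^+ 2 + 2 * b * (b + a) / (K + 1) + c ^+ 2 / (K + 1) ^+ 2
  = b ^+ 2 + 2 * b * ((K / (K + 1)) * a) + ((1 - 2 / (K + 1)) * a ^+ 2 + c ^+ 2 / (K + 1) ^+ 2).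
  by field; rewrite gt_eqF.
have h3 : 2 * b * ((K / (K + 1)) * a) <= 2 * b * a' by apply: ler_wpM2l => //; lra.
lra.
Qed.
Lemma ln_step (m : R) : 0 < m -> (m + 1)^-1 <= ln (m + 1) - ln m.
Proof.
move=> m0.
have m1 : 0 < m + 1 by lra.
have h := @le_ln1Dx R (m / (m + 1) - 1).
have : -1 < m / (m + 1) - 1 by have := divr_gt0 m0 m1; lra.
move=> /h.
have -> : 1 + (m / (m + 1) - 1) = m / (m + 1) by ring.
rewrite lnM ?posrE ?invr_gt0 // lnV ?posrE //.
have -> : m / (m + 1) - 1 = - (m + 1)^-1 by field; rewrite gt_eqF.
lra.
Qed.

Lemma harm (m : nat) : (1 <= m)%N ->
  \sum_(k < m.+1) (k%:R : R)^-1 <= 1 + ln (m%:R : R).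
Proof.
elim: m => [//|m IH] _.
case: m IH => [|m] IH.
  by rewrite !big_ord_recr big_ord0 /= add0r invr0 add0r ln1 addr0 invr1.
rewrite big_ord_recr /=.
have := IH isT.
have m0 : 0 < (m.+1%:R : R) by rewrite ltr0n.
have := ln_step m0.
rewrite -natr1 -[(m.+2)%:R]natr1 -[(m.+1)%:R]natr1.
lra.
Qed.

Lemma harm_T (T : nat) : (0 < T)%N ->
  \sum_(k < T) (k%:R : R)^-1 <= 1 + ln (T%:R : R).
Proof.
case: T => [//|m] _.
case: m => [|m].
  by rewrite big_ord_recr big_ord0 /= add0r invr0 ln1 addr0.
apply: le_trans (harm _) _ => //.
rewrite lerD2l ler_ln ?posrE ?ltr0n //.
by rewrite ler_nat.
Qed.

Lemma sum_isqrt (T : nat) : (0 < T)%N ->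
  (\sum_(k < T) (Num.sqrt (k%:R : R))^-1) ^+ 2 <= T%:R * (1 + ln (T%:R : R)).
Proof.
move=> T0.
have := CS_sum (fun _ : 'I_T => (1 : R)) (fun k : 'I_T => (Num.sqrt (k%:R : R))^-1).
rewrite (eq_bigr (fun k : 'I_T => (Num.sqrt (k%:R : R))^-1)); last by move=> i _; rewrite mul1r.
move=> h; apply: le_trans h _.
rewrite (eq_bigr (fun _ => 1)); last by move=> i _; rewrite expr1n.
rewrite sumr_const card_ord.
apply: ler_wpM2l; first exact: ler0n.
rewrite (eq_bigr (fun k : 'I_T => (k%:R : R)^-1)); first exact: harm_T.
by move=> i _; rewrite exprVn sqr_sqrtr ?ler0n.
Qed.

End RealRec.

Lemma alg_id (R : realType) (rho G nn K a1 b1 : R) : 0 < rho -> 0 < nn -> 1 <= K ->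
  (1 - 2 / (K + 1)) * (2 * (a1 ^+ 2 + b1 ^+ 2)) +
    2 * (4 * G / (nn * rho)) * (a1 + b1) / (K + 1) + (4 * G / rho) ^+ 2 / (K + 1) ^+ 2 =
    2 * ((1 - 2 * (rho * (K + 1))^-1 * rho) * (a1 ^+ 2 + b1 ^+ 2) +
     2 * (rho * (K + 1))^-1 * (2 * G / nn) * (a1 + b1) + (rho * (K + 1))^-1 ^+ 2 * (8 * G ^+ 2)).
Proof.
move=> r0 n0 K1.
have hk : 0 < K + 1 by lra.
field.
by rewrite !gt_eqF //; apply: mulr_gt0.
Qed.

Ltac nn := repeat (match goal with
 | |- is_true (0 <= _ * _) => apply: mulr_ge0
 | |- is_true (0 <= _ + _) => apply: addr_ge0
 | |- is_true (0 <= _ ^-1) => rewrite invr_ge0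
 | |- is_true (0 <= _ ^+ 2) => exact: sqr_ge0
 | |- is_true (0 <= Num.sqrt _) => exact: sqrtr_ge0
 | |- is_true (0 <= _%:R) => exact: ler0n
 | |- is_true (0 <= 2) => exact: ler0n
 end); try assumption.

Unset Implicit Arguments.
Theorem theorem2 (R : realType) (p n T : nat) (Z : Type)
  (W V : set (vec R p)) (ell : vec R p -> vec R p -> Z -> R)
  (rho G : R) (S : 'I_n -> Z) (eps delta c zeta : R)
  (d : measure_display) (Omega : measurableType d) (P : probability Omega R)
  (N : Omega -> noise_index T p -> R) :
  W 0 -> V 0 -> closed W -> closed V -> convex_set_ W -> convex_set_ V ->
  (forall w v z, W w -> V v ->
     differentiable (fun x : vec R p * vec R p => ell x.1 x.2 z) (w, v)) ->
  0 < rho ->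
  (forall v z, V v -> strongly_convex_on rho W (fun w => ell w v z)) ->
  (forall w z, W w -> strongly_concave_on rho V (fun v => ell w v z)) ->
  0 < G ->
  (forall w v z, W w -> V v ->
     enorm (grad (fun w0 => ell w0 v z) w) <= G /\
     enorm (grad (fun v0 => ell w v0 z) v) <= G) ->
  (0 < n)%N -> 0 < eps -> 0 < delta -> (0 < T)%N -> 0 < c ->
  expR (- (p%:R / 8)) < zeta -> zeta < 1 ->
  let sigma := c * (G * Num.sqrt (T%:R * ln delta^-1)) / (n%:R * eps) in
  gaussian_iid P N sigma ->
  let eta := fun t : nat => (rho * t%:R)^-1 in
  let out := fun (S0 : 'I_n -> Z) (om : Omega) =>
    dpgda_avg ell W V eta S0 (noise_vec (N om) true) (noise_vec (N om) false) T in
  let p_zeta := 1 + powR (8 * ln (2 * T%:R / zeta) / p%:R) 4^-1 in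
  let logeT := ln (expR 1 * T%:R) in
  exists E : set Omega, measurable E /\ ((1 - zeta)%:E <= P E)%E /\
    forall om, E om ->
      let wT := (out S om).1 in let vT := (out S om).2 in
      let wstar := argmin_on W (fun w => emp_risk ell S w vT) in
      let vstar := argmax_on V (fun v => emp_risk ell S wT v) in
      let g_w := enorm (wstar - wT) in
      let g_v := enorm (vstar - vT) in
      let gamma :=
        4 * G / (n%:R * rho)
        + 2 * sigma * Num.sqrt p%:R * logeT / T%:R * p_zeta
        + 4 * Num.sqrt logeT *
          Num.sqrt (G ^+ 2 / (rho ^+ 2 * T%:R)
                    + sigma ^+ 2 * p%:R / (rho ^+ 2 * T%:R) * p_zeta ^+ 2
                    + 2 * G * sigma * Num.sqrt p%:R / (rho ^+ 2 * T%:R) * p_zeta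
                    + (g_w + g_v) * sigma * Num.sqrt p%:R / (rho * logeT) * p_zeta) in
      forall S' : 'I_n -> Z, differ_in_one S S' ->
        enorm (wT - (out S' om).1) + enorm (vT - (out S' om).2) <= gamma.
Proof.
move=> W0 V0 Wcl Vcl Wcv Vcv Hd rho0 Hcvx Hccv G0 HG n0 eps0 delta0 T0 c0 zl zu.
move=> sigma Hg eta out p_zeta logeT.
have z0 : Z := S (Ordinal n0).
have Wb : exists M, forall y, W y -> enorm y <= M.
  exists (2 * G / rho) => y Wy.
  apply: (@sc_bounded _ _ W (fun w => ell w 0 z0) rho G) => // [|x Wx].
    exact: Hcvx.
  by have [] := HG x 0 z0 Wx V0.
have Vb : exists M, forall y, V y -> enorm y <= M.
  exists (2 * G / rho) => y Vy.
  apply: (@sc_bounded _ _ V (fun v => - ell 0 v z0) rho G) => // [|x Vx].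
    exact: Hccv.
  rewrite (gradN (f := fun v => ell 0 v z0)) ?enormN; first by have [] := HG 0 x z0 W0 Vx.
  by move=> e; exact: (derV Hd).
exists setT; split; first exact: measurableT.
split.
  rewrite probability_setT lee_fin; have := lt_trans (expR_gt0 _) zl; lra.
move=> om _ wT vT wstar vstar g_w g_v gamma S' HS.
set bw := noise_vec (N om) true; set bv := noise_vec (N om) false.
pose r (S0 : 'I_n -> Z) (k : nat) := dpgda_run ell W V eta S0 bw bv k.
have mem : forall S0 k, W (r S0 k).1 /\ V (r S0 k).2.
  move=> S0; elim=> [|k [IHw IHv]] /=; first by [].
  by split; [apply: (proj_spec _ Wcl W0 Wb).1 | apply: (proj_spec _ Vcl V0 Vb).1].
set b := 4 * G / (n%:R * rho); set c' := 4 * G / rho.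
have b0 : 0 <= b by apply: divr_ge0; [lra|apply: mulr_ge0; [exact: ler0n|lra]].
have c0' : 0 <= c' by apply: divr_ge0; lra.
have np : 0 < n%:R :> R by rewrite ltr0n.
pose A k := enorm ((r S k).1 - (r S' k).1).
pose B k := enorm ((r S k).2 - (r S' k).2).
have inv : forall k, 2 * (A k ^+ 2 + B k ^+ 2) <= (b + c' * (Num.sqrt k%:R)^-1) ^+ 2.
  elim=> [|k IH].
    rewrite /A /B /= subrr enorm0 expr0n /= addr0 mulr0; exact: sqr_ge0.
  have [Ww Vv] := mem S k; have [Ww' Vv'] := mem S' k.
  have e0 : 0 <= eta k.+1 by rewrite /eta invr_ge0; apply: mulr_ge0; [lra|exact: ler0n].
  have hs := step_bound Hd Hcvx Hccv HG n0 HS Wcl Vcl W0 V0 Wcv Vcv Wb Vb (bw k) (bv k) Ww Vv Ww' Vv' e0.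
  have hs' : A k.+1 ^+ 2 + B k.+1 ^+ 2 <=
     (1 - 2 * eta k.+1 * rho) * (A k ^+ 2 + B k ^+ 2) +
     2 * eta k.+1 * (2 * G / n%:R) * (A k + B k) + eta k.+1 ^+ 2 * (8 * G ^+ 2) := hs.
  have Ak0 := enorm_ge0 ((r S k).1 - (r S' k).1).
  have Bk0 := enorm_ge0 ((r S k).2 - (r S' k).2).
  have hY : A k + B k <= b + c' * (Num.sqrt k%:R)^-1.
    apply: sq_le_ge0.
      by apply: addr_ge0 => //; apply: mulr_ge0 => //; rewrite invr_ge0 sqrtr_ge0.
    apply: le_trans IH.
    have : 0 <= (A k - B k) ^+ 2 by exact: sqr_ge0.
    rewrite /A /B; nra.
  case: k IH hs' hY Ak0 Bk0 {hs Ww Vv Ww' Vv' e0} => [|k] IH hs' hY Ak0 Bk0.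
    have A0 : A 0%N = 0 by rewrite /A /= subrr enorm0.
    have B0 : B 0%N = 0 by rewrite /B /= subrr enorm0.
    rewrite A0 B0 in hs'.
    rewrite sqrtr1 invr1 mulr1.
    have he : eta 1%N = rho^-1 by rewrite /eta mulr1.
    rewrite he in hs'.
    have hc : 2 * (rho^-1 ^+ 2 * (8 * G ^+ 2)) = c' ^+ 2 by rewrite /c'; field; rewrite gt_eqF.
    have : c' ^+ 2 <= (b + c') ^+ 2 by apply: sq_mono => //; lra.
    rewrite -hc.
    move: hs'; set e := rho^-1.
    rewrite !expr0n /= !addr0 !mulr0 !add0r.
    lra.
  have K1 : 1 <= (k.+1%:R : R) by rewrite ler1n.
  have hr := rec_real K1 b0 c0' (X := 2 * (A k.+1 ^+ 2 + B k.+1 ^+ 2)) (Y := A k.+1 + B k.+1)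
     (mulr_ge0 (ler0n _ 2) (addr_ge0 (sqr_ge0 _) (sqr_ge0 _))) (addr_ge0 Ak0 Bk0) IH hY.
  rewrite -[(k.+2)%:R]natr1.
  apply: le_trans hr.
  have -> : (1 - 2 / (k.+1%:R + 1)) * (2 * (A k.+1 ^+ 2 + B k.+1 ^+ 2)) +
    2 * b * (A k.+1 + B k.+1) / (k.+1%:R + 1) + c' ^+ 2 / (k.+1%:R + 1) ^+ 2 =
    2 * ((1 - 2 * eta k.+2 * rho) * (A k.+1 ^+ 2 + B k.+1 ^+ 2) +
     2 * eta k.+2 * (2 * G / n%:R) * (A k.+1 + B k.+1) + eta k.+2 ^+ 2 * (8 * G ^+ 2)).
    rewrite /eta /b /c' -[(k.+2)%:R]natr1.
    exact: (@alg_id R rho G n%:R (k.+1%:R) (A k.+1) (B k.+1) rho0 np K1).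
  by apply: ler_wpM2l => //; lra.
have fb : forall k, A k + B k <= b + c' * (Num.sqrt k%:R)^-1.
  move=> k; apply: sq_le_ge0.
    by apply: addr_ge0 => //; apply: mulr_ge0 => //; rewrite invr_ge0 sqrtr_ge0.
  apply: le_trans (inv k).
  have : 0 <= (A k - B k) ^+ 2 by exact: sqr_ge0.
  have := enorm_ge0 ((r S k).1 - (r S' k).1); have := enorm_ge0 ((r S k).2 - (r S' k).2).
  rewrite /A /B; nra.
have Tp : 0 < T%:R :> R by rewrite ltr0n.
have hw : enorm (wT - (out S' om).1) <= T%:R^-1 * \sum_(k < T) A k.
  have -> : wT - (out S' om).1 = T%:R^-1 *: \sum_(k < T) ((r S k).1 - (r S' k).1).
    by rewrite sumrB scalerBr.
  rewrite enormZ ger0_norm ?invr_ge0 ?ler0n //; apply: ler_wpM2l; last exact: enorm_sum.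
  by rewrite invr_ge0 ler0n.
have hv : enorm (vT - (out S' om).2) <= T%:R^-1 * \sum_(k < T) B k.
  have -> : vT - (out S' om).2 = T%:R^-1 *: \sum_(k < T) ((r S k).2 - (r S' k).2).
    by rewrite sumrB scalerBr.
  rewrite enormZ ger0_norm ?invr_ge0 ?ler0n //; apply: ler_wpM2l; last exact: enorm_sum.
  by rewrite invr_ge0 ler0n.
set Sf := \sum_(k < T) (Num.sqrt (k%:R : R))^-1.
have hsum : T%:R^-1 * \sum_(k < T) A k + T%:R^-1 * \sum_(k < T) B k <= b + c' * (T%:R^-1 * Sf).
  rewrite -mulrDr -big_split /=.
  apply: le_trans (_ : T%:R^-1 * \sum_(k < T) (b + c' * (Num.sqrt (k%:R : R))^-1) <= _).
    apply: ler_wpM2l; first by rewrite invr_ge0 ler0n.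
    by apply: ler_sum => k _; exact: fb.
  rewrite big_split /= sumr_const card_ord -mulr_sumr -/Sf mulrDr.
  by rewrite -(mulr_natr b T) mulrCA mulVf ?gt_eqF // mulr1 mulrCA.
have Sf0 : 0 <= Sf by apply: sumr_ge0 => k _; rewrite invr_ge0 sqrtr_ge0.
have hL : logeT = 1 + ln (T%:R : R).
  by rewrite /logeT lnM ?posrE ?expR_gt0 // expRK.
have L0 : 0 <= logeT by rewrite hL; apply: addr_ge0 => //; apply: ln_ge0; rewrite ler1n.
have hSf := sum_isqrt R T0; rewrite -/Sf -hL in hSf.
set Q := G ^+ 2 / (rho ^+ 2 * T%:R).
have Q0 : 0 <= Q by apply: divr_ge0; [exact: sqr_ge0|apply: mulr_ge0; [exact: sqr_ge0|exact: ler0n]].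
have key : c' * (T%:R^-1 * Sf) <= 4 * Num.sqrt logeT * Num.sqrt Q.
  apply: sq_le_ge0; first by apply: mulr_ge0; [apply: mulr_ge0; [lra|exact: sqrtr_ge0]|exact: sqrtr_ge0].
  have -> : (4 * Num.sqrt logeT * Num.sqrt Q) ^+ 2 = (c' ^+ 2 * T%:R^-1 ^+ 2) * (T%:R * logeT).
    rewrite !exprMn !sqr_sqrtr // /Q /c'; field.
    by rewrite !gt_eqF.
  rewrite exprMn -mulrA; apply: ler_wpM2l; first exact: sqr_ge0.
  rewrite exprMn; apply: ler_wpM2l => //; exact: sqr_ge0.
rewrite /gamma -/Q -/b.
have sg0 : 0 <= sigma.
  rewrite /sigma; apply: divr_ge0; last by apply: mulr_ge0; [exact: ler0n|lra].
  apply: mulr_ge0; first lra.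
  by apply: mulr_ge0; [lra|exact: sqrtr_ge0].
have pz0 : 0 <= p_zeta by rewrite /p_zeta; apply: addr_ge0; [exact: ler01|exact: powR_ge0].
have gw0 : 0 <= g_w by exact: enorm_ge0.
have gv0 : 0 <= g_v by exact: enorm_ge0.
have r0 : 0 <= rho by lra.
have Gg0 : 0 <= G by lra.
set t1 := 2 * sigma * Num.sqrt p%:R * logeT / T%:R * p_zeta.
set t2 := sigma ^+ 2 * p%:R / (rho ^+ 2 * T%:R) * p_zeta ^+ 2.
set t3 := 2 * G * sigma * Num.sqrt p%:R / (rho ^+ 2 * T%:R) * p_zeta.
set t4 := (g_w + g_v) * sigma * Num.sqrt p%:R / (rho * logeT) * p_zeta.
have t10 : 0 <= t1 by rewrite /t1; nn.
have t20 : 0 <= t2 by rewrite /t2; nn.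
have t30 : 0 <= t3 by rewrite /t3; nn.
have t40 : 0 <= t4 by rewrite /t4; nn.
have sm : Num.sqrt Q <= Num.sqrt (Q + t2 + t3 + t4).
  by rewrite ler_sqrt; [lra|lra].
have sm' : 4 * Num.sqrt logeT * Num.sqrt Q <= 4 * Num.sqrt logeT * Num.sqrt (Q + t2 + t3 + t4).
  apply: ler_wpM2l; [apply: mulr_ge0; [lra|exact: sqrtr_ge0] | exact: sm].
lra.
Qed.
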